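(* Let $q\in\mathbb{C}^*$ with $|q|>1$. For all integers $n\geq0$, $$\frac{n+1}{(q;q)_{n+1}}=-\sum_{k=0}^{n}\frac{1}{(q^{k+1}-1)(q;q)_{n-k}}.$$
   Context: $(q;q)_0=1$ and $(q;q)_n=\prod_{k=1}^n(1-q^k)$ for $n\geq1$. *)

(* Defs.v *)
From mathcomp Require Import all_boot all_order all_algebra.
From mathcomp Require Import complex.
From mathcomp Require Import reals.
Set Implicit Arguments. Unset Strict Implicit. Unset Printing Implicit Defensive.
Import Order.TTheory GRing.Theory Num.Theory.
Local Open Scope ring_scope.

Definition qpoch {C : comPzRingType} (q : C) (n : nat) : C :=
  \prod_(1 <= k < n.+1) (1 - q ^+ k).

(* Main.v *)
Require Import Defs.
From mathcomp Require Import all_boot all_order all_algebra.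
From mathcomp Require Import complex.
From mathcomp Require Import reals.
From mathcomp Require Import ring zify.
Import Order.TTheory GRing.Theory Num.Theory.
Local Open Scope ring_scope.

Section Gen.
Variables (F : fieldType) (q : F).
Hypothesis hq : forall m, q ^+ m.+1 != 1.

Let a n := (qpoch q n)^-1.
Let c k := (1 - q ^+ k.+1)^-1.
Let h n := \sum_(k < n.+1) a (n - k) * c k.

Lemma qpochS n : qpoch q n.+1 = qpoch q n * (1 - q ^+ n.+1).
Proof. by rewrite /qpoch big_nat_recr. Qed.

Lemma qpoch0 : qpoch q 0 = 1.
Proof. by rewrite /qpoch big_geq. Qed.

Lemma dnz k : 1 - q ^+ k.+1 != 0.
Proof. by rewrite subr_eq0 eq_sym hq. Qed.

Lemma qpoch_neq0 n : qpoch q n != 0.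
Proof.
elim: n => [|n IH]; first by rewrite qpoch0 oner_neq0.
by rewrite qpochS mulf_neq0 // dnz.
Qed.

Lemma aS n : a n.+1 * (1 - q ^+ n.+1) = a n.
Proof.
by rewrite /a qpochS invfM -mulrA mulVf ?mulr1 ?dnz.
Qed.

Lemma tele n : \sum_(j < n.+1) q ^+ j * a j = a n.
Proof.
elim: n => [|n IH].
  by rewrite big_ord_recr big_ord0 /= add0r expr0 mul1r.
rewrite big_ord_recr /= IH -(aS n); ring.
Qed.

Lemma hS n : h n.+1 * (1 - q ^+ n.+2) = h n + a n.+1.
Proof.
rewrite /h big_distrl /=.
have dec : forall k : 'I_n.+2, a (n.+1 - k) * c k * (1 - q ^+ n.+2) =
   a (n.+1 - k) * (1 - q ^+ (n.+1 - k)) * c k + q ^+ (n.+1 - k) * a (n.+1 - k).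
  move=> k.
  have hk : (n.+2 = (n.+1 - k) + k.+1)%N.
    by have := ltn_ord k; lia.
  have e : c k * (1 - q ^+ k.+1) = 1 by rewrite /c mulVf ?dnz.
  have -> : q ^+ n.+2 = q ^+ (n.+1 - k) * q ^+ k.+1 by rewrite -exprD -hk.
  transitivity (a (n.+1 - k) * (1 - q ^+ (n.+1 - k)) * c k +
     q ^+ (n.+1 - k) * a (n.+1 - k) * (c k * (1 - q ^+ k.+1))); first by ring.
  by rewrite e mulr1.
rewrite (eq_bigr _ (fun k _ => dec k)) big_split /=.
congr (_ + _).
  rewrite big_ord_recr /= subnn expr0 subrr mulr0 mul0r addr0.
  apply: eq_bigr => k _ /=.
  have hk : (n.+1 - k = (n - k).+1)%N by have := ltn_ord k; lia.
  by rewrite hk aS.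
rewrite (reindex_inj rev_ord_inj) /= -(tele n.+1).
apply: eq_bigr => k _.
have hk : (n.+1 - (n.+2 - k.+1) = k)%N by have := ltn_ord k; lia.
by rewrite hk.
Qed.

Lemma main n : h n = n.+1%:R * a n.+1.
Proof.
elim: n => [|n IH].
  by rewrite /h big_ord_recr big_ord0 /= add0r mul1r /a /c /= qpochS qpoch0 invr1 !mul1r.
apply: (mulIf (dnz n.+1)).
by rewrite hS IH -mulrA aS [n.+2%:R]mulrS mulrDl mul1r addrC.
Qed.

Lemma gen n : n.+1%:R / qpoch q n.+1 =
  - \sum_(0 <= k < n.+1) 1 / ((q ^+ k.+1 - 1) * qpoch q (n - k)%N).
Proof.
have -> : n.+1%:R / qpoch q n.+1 = n.+1%:R * a n.+1 by [].
rewrite -main /h big_mkord -sumrN.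
apply: eq_bigr => k _.
by rewrite mul1r invfM -opprB invrN mulNr opprK mulrC.
Qed.

End Gen.

Local Open Scope complex_scope.

Theorem lemma2p8 (R : realType) (q : R[i]) (hq0 : q != 0) (hq : 1 < `|q|)
  (n : nat) :
  (n.+1)%:R / qpoch q n.+1 =
  - \sum_(0 <= k < n.+1) 1 / ((q ^+ k.+1 - 1) * qpoch q (n - k)%N).
Proof.
have H : forall m, q ^+ m.+1 != 1.
  move=> m; apply/eqP => e.
  have := exprn_egt1 m.+1 hq.
  by rewrite -normrX e normr1 ltxx.
exact: (@gen _ q H n).
Qed.
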